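(* Let $A=(a_{ij})$ be a $3\times3$ Cartan matrix of infinite type whose principal submatrix $A_{12}$ is also of infinite type (i.e. $a_{12}a_{21}\ge 4$). Let $$\kappa=a_{12}\omega_1^2+a_{12}a_{21}\omega_1\omega_2+a_{21}\omega_2^2+a_{12}a_{31}\omega_1\omega_3+a_{21}a_{32}\omega_2\omega_3.$$ Then $\mathbb{Q}[\omega_1,\omega_2,\omega_3]^{\langle\sigma_1,\sigma_2\rangle}=\mathbb{Q}[\kappa,\omega_3]$.
   Context: A $3\times 3$ (generalized) Cartan matrix $A=(a_{ij})$ is an integer matrix with $a_{ii}=2$, $a_{ij}\le 0$ for $i\ne j$, $a_{ij}=0\iff a_{ji}=0$; infinite type means indecomposable and not of finite type. $\omega_1,\omega_2,\omega_3$ have degree 2 ($\mathbb{Q}[\omega_1,\omega_2,\omega_3]=H^*(BT;\mathbb{Q})$), $\alpha_j=\sum_i a_{ij}\omega_i$, and $\sigma_j(\omega_j)=\omega_j-\alpha_j$, $\sigma_j(\omega_i)=\omega_i$ for $i\ne j$. *)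

(* Defs.v *)
From HB Require Import structures.
From mathcomp Require Import all_boot all_order all_algebra.
From mathcomp Require Import mpoly.
Set Implicit Arguments. Unset Strict Implicit. Unset Printing Implicit Defensive.
Import Order.TTheory GRing.Theory Num.Theory.
Local Open Scope ring_scope.

(* Indices are 0-based: omega_1, omega_2, omega_3 are 'X_0, 'X_1, 'X_2 and
   a_ij is A (i-1) (j-1). *)

Definition is_cartan (A : 'M[int]_3) : Prop :=
  (forall i, A i i = 2) /\
  (forall i j, i != j -> A i j <= 0) /\
  (forall i j, (A i j == 0) = (A j i == 0)).

Definition indecomposable (A : 'M[int]_3) : Prop :=
  forall S : {set 'I_3}, S != set0 -> S != setT ->
    exists i, exists j, [/\ i \in S, j \notin S & A i j != 0].

Definition principal_minor (A : 'M[int]_3) (S : {set 'I_3}) : int :=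
  \det (\matrix_(i < #|S|, j < #|S|) A (enum_val i) (enum_val j)).

(* finite type: all principal minors positive (Kac, Thm 4.3 / Lemma 4.5) *)
Definition finite_type (A : 'M[int]_3) : Prop :=
  forall S : {set 'I_3}, S != set0 -> 0 < principal_minor A S.

Definition infinite_type (A : 'M[int]_3) : Prop :=
  indecomposable A /\ ~ finite_type A.

Definition omega (i : 'I_3) : {mpoly rat[3]} := 'X_i.

Definition alpha (A : 'M[int]_3) (j : 'I_3) : {mpoly rat[3]} :=
  \sum_(i < 3) (A i j)%:~R *: omega i.

Definition sigma (A : 'M[int]_3) (j : 'I_3) (p : {mpoly rat[3]}) : {mpoly rat[3]} :=
  p \mPo [tuple (if i == j then omega j - alpha A j else omega i) | i < 3].

(* action of a word in the generators sigma_1, sigma_2 (letters 0, 1 of 'I_2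
   stand for sigma_1, sigma_2).  Since sigma_j is an involution, every element
   of the group <sigma_1, sigma_2> is such a word. *)
Definition act_word (A : 'M[int]_3) (w : seq 'I_2) (p : {mpoly rat[3]}) :=
  foldr (fun j q => sigma A (widen_ord (leqnSn 2) j) q) p w.

Definition invariant12 (A : 'M[int]_3) (p : {mpoly rat[3]}) : Prop :=
  forall w : seq 'I_2, act_word A w p = p.

Definition kappa (A : 'M[int]_3) : {mpoly rat[3]} :=
  let a i j : rat := (A i j)%:~R in
  let w := omega in
  a 0 1 *: (w 0 ^+ 2) + (a 0 1 * a 1 0) *: (w 0 * w 1) + a 1 0 *: (w 1 ^+ 2)
  + (a 0 1 * a 2 0) *: (w 0 * w 2) + (a 1 0 * a 2 1) *: (w 1 * w 2).

(* Main.v *)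
Require Import Defs.
From HB Require Import structures.
From mathcomp Require Import all_boot all_order all_algebra.
From mathcomp Require Import mpoly.
From mathcomp Require Import ring lra zify.
Import Order.TTheory GRing.Theory Num.Theory.
Local Open Scope ring_scope.


Lemma compX n k (t : n.-tuple {mpoly rat[k]}) i : 'X_i \mPo t = tnth t i.
Proof. by rewrite /comp_mpoly mmapX mmap1U. Qed.

Lemma comp_assoc n k l (p : {mpoly rat[n]}) (t : n.-tuple {mpoly rat[k]})
  (s : k.-tuple {mpoly rat[l]}) :
  (p \mPo t) \mPo s = p \mPo [tuple (tnth t i \mPo s) | i < n].
Proof.
rewrite [p \mPo t]comp_mpolyEX [p \mPo _]comp_mpolyEX raddf_sum /=.
apply: eq_bigr => m _; rewrite comp_mpolyZ; congr (_ *: _).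
rewrite !comp_mpolyX rmorph_prod /=; apply: eq_bigr => i _.
by rewrite rmorphXn tnth_mktuple.
Qed.

Lemma tuple3E T (t : 3.-tuple T) : t = [tuple tnth t 0; tnth t 1; tnth t 2].
Proof. by apply: eq_from_tnth => -[[|[|[|?]]] Hi] //=; congr tnth; apply/val_inj. Qed.

Section S.
Variable A : 'M[int]_3.
Hypothesis HA : forall i, A i i = 2.

Lemma act_comp n w (p : {mpoly rat[n]}) (t : n.-tuple {mpoly rat[3]}) :
  act_word A w (p \mPo t) = p \mPo [tuple act_word A w (tnth t i) | i < n].
Proof.
elim: w => [|j w IH] /=.
  by congr comp_mpoly; apply: eq_from_tnth => i; rewrite tnth_mktuple.
rewrite IH /sigma comp_assoc; congr comp_mpoly; apply: eq_from_tnth => i.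
by rewrite !tnth_mktuple.
Qed.

Lemma sigmaX j i : sigma A j 'X_i = if i == j then 'X_j - alpha A j else 'X_i.
Proof. by rewrite /sigma /comp_mpoly mmapX mmap1U tnth_mktuple. Qed.

Lemma alphaE j : alpha A j = (A 0 j)%:~R%:MP * 'X_0 + (A 1 j)%:~R%:MP * 'X_1 + (A 2 j)%:~R%:MP * 'X_2.
Proof.
rewrite /alpha !big_ord_recr big_ord0 /= add0r !mul_mpolyC.
have E1 : (widen_ord (leqnSn 2) (widen_ord (leqnSn 1) ord_max) : 'I_3) = 0 by apply/val_inj.
have E2 : (widen_ord (leqnSn 2) ord_max : 'I_3) = 1 by apply/val_inj.
have E3 : (ord_max : 'I_3) = 2 by apply/val_inj.
by rewrite E1 E2 E3.
Qed.

Lemma sigma_kappa0 : sigma A 0 (kappa A) = kappa A.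
Proof.
rewrite /kappa /omega -!mul_mpolyC /sigma !(rmorphD, rmorphM, rmorphXn) /= -/(sigma A 0).
rewrite !compX !tnth_mktuple !comp_mpolyC /omega /= alphaE HA.
ring.
Qed.

Lemma sigma_kappa1 : sigma A 1 (kappa A) = kappa A.
Proof.
rewrite /kappa /omega -!mul_mpolyC /sigma !(rmorphD, rmorphM, rmorphXn) /= -/(sigma A 0).
rewrite !compX !tnth_mktuple !comp_mpolyC /omega /= alphaE HA.
ring.
Qed.

Lemma widen01 (j : 'I_2) : widen_ord (leqnSn 2) j = 0 \/ widen_ord (leqnSn 2) j = 1.
Proof. by case: j => -[|[|?]] Hj; [left|right|]; try apply/val_inj. Qed.

Lemma act_kappa w : act_word A w (kappa A) = kappa A.
Proof.
elim: w => [|j w IH] //=; rewrite IH.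
by case: (widen01 j) => ->; [exact: sigma_kappa0 | exact: sigma_kappa1].
Qed.

Lemma act_z w : act_word A w 'X_2 = 'X_2.
Proof.
elim: w => [|j w IH] //=; rewrite IH sigmaX.
by case: (widen01 j) => ->.
Qed.

Lemma converse (q : {mpoly rat[2]}) : invariant12 A (q \mPo [tuple kappa A; omega 2]).
Proof.
move=> w; rewrite act_comp; congr comp_mpoly; apply: eq_from_tnth => i.
rewrite tnth_mktuple; case: i => -[|[|?]] Hi //=.
  exact: act_kappa.
exact: act_z.
Qed.
End S.


Lemma ring_trick (R : comRingType) (u v e W : R) : e = 1 -> v - u = (e - 1) * W -> u = v.
Proof. by move=> -> /eqP; rewrite subrr mul0r subr_eq0 => /eqP. Qed.

Section S2.
Variable A : 'M[int]_3.
Hypothesis HA : forall i, A i i = 2.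
Hypothesis Ha : (A 0 1)%:~R != 0 :> rat.

Definition T3 : 3.-tuple {mpoly rat[3]} := [tuple 'X_1; 'X_2; kappa A].

Lemma T3X0 : 'X_0 \mPo T3 = 'X_1. Proof. by rewrite compX. Qed.
Lemma T3X1 : 'X_1 \mPo T3 = 'X_2. Proof. by rewrite compX. Qed.
Lemma T3X2 : 'X_2 \mPo T3 = kappa A. Proof. by rewrite compX. Qed.

Definition Sd (p : {mpoly rat[3]}) :=
  exists F G : {mpoly rat[3]}, p = F \mPo T3 + 'X_0 * (G \mPo T3).

Lemma Sd0 : Sd 0.
Proof. by exists 0, 0; rewrite !comp_mpoly0 mulr0 addr0. Qed.
Lemma Sd1 : Sd 1.
Proof. by exists 1, 0; rewrite comp_mpoly1 comp_mpoly0 mulr0 addr0. Qed.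
Lemma SdD p q : Sd p -> Sd q -> Sd (p + q).
Proof.
move=> [F [G ->]] [F' [G' ->]]; exists (F + F'), (G + G').
rewrite !rmorphD /=; ring.
Qed.
Lemma SdZ c p : Sd p -> Sd (c *: p).
Proof.
move=> [F [G ->]]; exists (c *: F), (c *: G).
rewrite !comp_mpolyZ -!mul_mpolyC; ring.
Qed.

Lemma SdX i p : Sd p -> Sd ('X_i * p).
Proof.
move=> [F [G ->]].
case: i => -[|[|[|?]]] Hi //.
- pose a := (A 0 1)%:~R : rat; pose b := (A 1 0)%:~R : rat.
  pose c := (A 2 0)%:~R : rat; pose d := (A 2 1)%:~R : rat.
  exists ((a^-1)%:MP * ('X_2 - b%:MP * 'X_0^+2 - (b*d)%:MP * ('X_0 * 'X_1)) * G).
  exists (F - (b%:MP * 'X_0 + c%:MP * 'X_1) * G).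
  have -> : ('X_(Ordinal Hi) : {mpoly rat[3]}) = 'X_0 by congr mpolyX; apply/val_inj.
  rewrite !(rmorphD, rmorphN, rmorphM, rmorphXn) /= !comp_mpolyC T3X0 T3X1 T3X2.
  apply: (@ring_trick _ _ _ ((a^-1)%:MP * a%:MP) ((G \mPo T3) * ('X_0 ^+ 2 + b%:MP * ('X_0 * 'X_1) + c%:MP * ('X_0 * 'X_2)))).
    by rewrite -mpolyCM mulVf.
  rewrite /kappa /omega /a /b /c /d -!mul_mpolyC.
  ring.
- exists ('X_0 * F), ('X_0 * G).
  have -> : ('X_(Ordinal Hi) : {mpoly rat[3]}) = 'X_1 by congr mpolyX; apply/val_inj.
  rewrite !rmorphM /= ?T3X0 ?T3X1; ring.
- exists ('X_1 * F), ('X_1 * G).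
  have -> : ('X_(Ordinal Hi) : {mpoly rat[3]}) = 'X_2 by congr mpolyX; apply/val_inj.
  rewrite !rmorphM /= ?T3X0 ?T3X1; ring.
Qed.

Lemma SdXn i k p : Sd p -> Sd ('X_i ^+ k * p).
Proof.
elim: k => [|k IH] Hp; first by rewrite expr0 mul1r.
by rewrite exprS -mulrA; apply: SdX; apply: IH.
Qed.

Lemma Sd_all p : Sd p.
Proof.
elim/mpolyind: p => [|c m p _ _ Hp]; first exact: Sd0.
apply: SdD => //; apply: SdZ.
rewrite mpolyXE_id !big_ord_recr big_ord0 /= mul1r.
rewrite -[X in Sd X]mulr1 -!mulrA.
apply: SdXn; apply: SdXn; apply: SdXn; exact: Sd1.
Qed.
End S2.


Section S3.
Variable A : 'M[int]_3.
Hypothesis HA : forall i, A i i = 2.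

Lemma sigma_comp n j (p : {mpoly rat[n]}) t :
  sigma A j (p \mPo t) = p \mPo [tuple sigma A j (tnth t i) | i < n].
Proof. exact: comp_assoc. Qed.

Lemma sigma0_T3 F : sigma A 0 (F \mPo T3 A) = F \mPo T3 A.
Proof.
rewrite sigma_comp; congr comp_mpoly; apply: eq_from_tnth => i.
rewrite tnth_mktuple; case: i => -[|[|[|?]]] Hi //=; rewrite ?sigmaX //.
exact: sigma_kappa0.
Qed.

Lemma alpha0_neq0 : alpha A 0 != 0.
Proof.
apply/negP => /eqP /(congr1 (mcoeff U_(0))).
rewrite alphaE HA !mcoeffD !mcoeffCM !mcoeffXU mcoeff0 /=.
rewrite !mulr1 !mulr0 !addr0 => /eqP; rewrite intr_eq0 //.
Qed.

Lemma inv0_G p F G : sigma A 0 p = p -> p = F \mPo T3 A + 'X_0 * (G \mPo T3 A) ->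
  G \mPo T3 A = 0.
Proof.
move=> Hs Hp; move: Hs; rewrite Hp /sigma rmorphD rmorphM /= -!/(sigma A 0 _).
rewrite !sigma0_T3 sigmaX eqxx => /eqP; rewrite -subr_eq0.
have -> : F \mPo T3 A + ('X_0 - alpha A 0) * (G \mPo T3 A) -
    (F \mPo T3 A + 'X_0 * (G \mPo T3 A)) = - (alpha A 0 * (G \mPo T3 A)) by ring.
rewrite oppr_eq0 mulf_eq0 (negbTE alpha0_neq0) /= => /eqP //.
Qed.
End S3.


Section S4.
Variable A : 'M[int]_3.
Hypothesis HA : forall i, A i i = 2.
Let a := (A 0 1)%:~R : rat.
Let b := (A 1 0)%:~R : rat.
Let c := (A 2 0)%:~R : rat.
Let d := (A 2 1)%:~R : rat.
Hypothesis Hale : a <= 0.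
Hypothesis Hab : 4 <= a * b.

Definition lin (s : rat * rat * rat) : {mpoly rat[3]} :=
  s.1.1%:MP * 'X_0 + s.1.2%:MP * 'X_1 + s.2%:MP * 'X_2.

Lemma sigma0_lin al be ga : sigma A 0 (lin (al, be, ga)) = lin (-al, be - b * al, ga - c * al).
Proof.
rewrite /lin /sigma !(rmorphD, rmorphM) /= !compX !tnth_mktuple !comp_mpolyC /omega /= alphaE HA.
rewrite /b /c; ring.
Qed.

Lemma sigma1_lin al be ga : sigma A 1 (lin (al, be, ga)) = lin (al - a * be, -be, ga - d * be).
Proof.
rewrite /lin /sigma !(rmorphD, rmorphM) /= !compX !tnth_mktuple !comp_mpolyC /omega /= alphaE HA.
rewrite /a /d; ring.
Qed.

Fixpoint st n : rat * rat * rat :=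
  match n with
  | 0 => (0, 1, 0)
  | n'.+1 => let: (al, be, ga) := st n' in
      (a * be - al, - be - b * (al - a * be), ga - d * be - c * (al - a * be))
  end.

Fixpoint wd n : seq 'I_2 := if n is n'.+1 then ord0 :: ord_max :: wd n' else [::].

Lemma act_wd n : act_word A (wd n) 'X_1 = lin (st n).
Proof.
elim: n => [|n IH] /=.
  by rewrite /lin /= mpolyC0 mpolyC1 !mul0r mul1r add0r addr0.
have -> : widen_ord (leqnSn 2) (ord0 : 'I_2) = 0 by apply/val_inj.
have -> : widen_ord (leqnSn 2) (ord_max : 'I_2) = 1 by apply/val_inj.
rewrite IH; case: (st n) => [[al be] ga].
rewrite sigma1_lin sigma0_lin; congr lin; congr (_, _, _); ring.
Qed.

Lemma step al be : al <= 0 -> a * be - 2 * al < 0 ->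
  [/\ a * be - al < al, a * be - al <= 0 &
      a * (- be - b * (al - a * be)) - 2 * (a * be - al) < 0].
Proof.
move=> H1 H2.
have H3 : a * be - al < al by move: H2; set u := a * be; lra.
have H4 : a * be - al <= 0 by move: H2 H1; set u := a * be; lra.
split => //.
have -> : a * (- be - b * (al - a * be)) - 2 * (a * be - al) =
   (a * be - 2 * al) + (a * b - 4) * (a * be - al) by rewrite /a /b; ring.
have : (a * b - 4) * (a * be - al) <= 0.
  by apply: mulr_ge0_le0 => //; rewrite subr_ge0.
move: H2; set u := a * be; set v := (a * b - 4) * (u - al); lra.
Qed.

Lemma st_inv n : (st n).1.1 <= 0 /\ a * (st n).1.2 - 2 * (st n).1.1 < 0
   /\ (st n.+1).1.1 < (st n).1.1.
Proof.
have Ha0 : a < 0.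
  rewrite lt_neqAle Hale andbT; apply/eqP => Ha; move: Hab; rewrite Ha mul0r; lra.
elim: n => [|n [H1 [H2 _]]].
  by rewrite /=; split; [lra | split; lra].
move: H1 H2 => /=; case: (st n) => [[al be] ga] /= H1 H2.
have [S1 S2 S3] := step _ _ H1 H2.
split => //; split => //.
by have [] := step _ _ S2 S3.
Qed.

Lemma st_decr m n : (m < n)%N -> (st n).1.1 < (st m).1.1.
Proof.
elim: n => [|n IH] //; rewrite ltnS leq_eqVlt => /orP [/eqP -> | /IH H].
  by have [_ [_ ]] := st_inv n.
have [_ [_ H']] := st_inv n; exact: lt_trans H' H.
Qed.

Lemma lin_coef0 s : (lin s)@_U_(0) = s.1.1.
Proof. by rewrite /lin !mcoeffD !mcoeffCM !mcoeffXU /= mulr1 !mulr0 !addr0. Qed.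

Lemma orbit_inj : injective (fun n => act_word A (wd n) 'X_1).
Proof.
move=> m n /=; rewrite !act_wd => /(congr1 (mcoeff U_(0))); rewrite !lin_coef0.
case: (ltngtP m n) => // [/st_decr | /st_decr] H E; move: H; rewrite E ltxx //.
Qed.
End S4.


Section S5.
Variable K Z : {mpoly rat[3]}.

Definition ht : 3.-tuple {poly {mpoly rat[3]}} := [tuple 'X; Z%:P; K%:P].

Definition PP (F : {mpoly rat[3]}) : {poly {mpoly rat[3]}} :=
  \sum_(m <- msupp F) (F@_m)%:MP%:P * \prod_(i < 3) (tnth ht i) ^+ m i.

Lemma PP_horner F v : (PP F).[v] = F \mPo [tuple v; Z; K].
Proof.
rewrite comp_mpolyE /PP -horner_evalE rmorph_sum; apply: eq_bigr => m _.
rewrite rmorphM rmorph_prod /= horner_evalE hornerC -mul_mpolyC; congr (_ * _).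
apply: eq_bigr => i _; rewrite rmorphXn /= horner_evalE; congr (_ ^+ _).
by case: i => -[|[|[|?]]] Hi //=; rewrite ?hornerX ?hornerC.
Qed.

Lemma orbit_const F p (l : nat -> {mpoly rat[3]}) : injective l ->
  (forall n, F \mPo [tuple l n; Z; K] = p) -> p = F \mPo [tuple 0; Z; K].
Proof.
move=> linj Hl.
have HQ : PP F - p%:P = 0.
  apply/eqP; apply/negPn/negP => Hnz.
  have := @max_poly_roots _ (PP F - p%:P) [seq l n | n <- iota 0 (size (PP F - p%:P))] Hnz.
  rewrite size_map size_iota ltnn => H; suff: false by []; apply: H.
    by apply/allP => v /mapP [n _ ->]; rewrite /root hornerD hornerN hornerC PP_horner Hl subrr.
  by rewrite map_inj_uniq // iota_uniq.
by rewrite -PP_horner; move/eqP: HQ; rewrite subr_eq0 => /eqP ->; rewrite hornerC.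
Qed.
End S5.


Theorem lemma7p3 (A : 'M[int]_3) :
  is_cartan A -> infinite_type A -> 4 <= A 0 1 * A 1 0 ->
  forall p : {mpoly rat[3]},
    invariant12 A p <->
    exists q : {mpoly rat[2]}, p = q \mPo [tuple kappa A; omega 2].
Proof.
move=> [HA [Hoff _]] _ H4 p; split; last by move=> [q ->]; exact: converse.
move=> Hinv.
have Hale : (A 0 1)%:~R <= 0 :> rat.
  by have := Hoff 0 1 isT; rewrite -(ler_int rat) mulr0z.
have Hab : 4 <= (A 0 1)%:~R * (A 1 0)%:~R :> rat.
  by rewrite -intrM (_ : 4 = (4:int)%:~R) // ler_int.
have Ha : (A 0 1)%:~R != 0 :> rat.
  by apply/eqP => E; move: Hab; rewrite E mul0r; lra.
have [F [G Hp]] := @Sd_all A Ha p.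
have HG : G \mPo T3 A = 0.
  apply: (@inv0_G A HA p F G _ Hp).
  have := Hinv [:: ord0]; rewrite /=.
  by have -> : widen_ord (leqnSn 2) (ord0 : 'I_2) = 0 by apply/val_inj.
rewrite HG mulr0 addr0 in Hp.
have Horb : forall n, F \mPo [tuple act_word A (wd n) 'X_1; 'X_2; kappa A] = p.
  move=> n; rewrite -(Hinv (wd n)) Hp act_comp; congr comp_mpoly.
  apply: eq_from_tnth => i; rewrite tnth_mktuple.
  by case: i => -[|[|[|?]]] Hi //=; rewrite ?act_z ?act_kappa.
have Hp0 := @orbit_const _ _ _ _ _ (@orbit_inj A HA Hale Hab) Horb.
exists (F \mPo [tuple 0; 'X_1; 'X_0]).
rewrite Hp0 comp_assoc; congr comp_mpoly.
apply: eq_from_tnth => i; rewrite tnth_mktuple.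
by case: i => -[|[|[|?]]] Hi //=; rewrite ?comp_mpoly0 ?compX.
Qed.
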